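(* In the oligopoly game below, for all parameter values ($\alpha>0$, unit $\boldsymbol\beta$, $\boldsymbol\gamma$ with all entries positive) there exists at least one equilibrium of one of the following types: (a) an equilibrium with $\mathbf A^*\mathbf q^*=\boldsymbol\beta$ and $\mathbf q^*=\boldsymbol\gamma/(2+\alpha)$; (b) an equilibrium with $\mathbf a_i^*=\boldsymbol\beta$ for all $i$ (product concentration); (c) an equilibrium exhibiting dominant-firm polarization, i.e. $\mathbf a_i^*=\boldsymbol\beta$ for exactly one firm $i$, which satisfies $\gamma_i=\|\boldsymbol\gamma\|_\infty$, and $\mathbf a_j^*=-\boldsymbol\beta$ for all $j\ne i$. Moreover, every equilibrium $(\mathbf A^*,\mathbf q^* )$ is either of type (a), or satisfies $\mathbf a_i^*=\sigma_i\boldsymbol\beta$ for all $i$ for some $\boldsymbol\sigma\in\{-1,1\}^n$ (in which case $\boldsymbol\sigma$ satisfies $(2+\alpha)-\frac{2+(n+1)\alpha}{2(1+\alpha)}\min_{j:\sigma_j=-1}\gamma_j\le\boldsymbol\sigma^\top\boldsymbol\gamma\le(2+\alpha)+\frac{2+(n+1)\alpha}{2(1+\alpha)}\min_{j:\sigma_j=1}\gamma_j$, with $\min\emptyset=+\infty$, and $\mathbf q^*=\frac{\boldsymbol\gamma}{2+\alpha}-\frac{\alpha(\boldsymbol\sigma^\top\boldsymbol\gamma-(2+\alpha))}{(2+\alpha)(2+(n+1)\alpha)}\boldsymbol\sigma$).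
   Context: Model: integers $n\ge2$, $m\ge2$; $\alpha>0$, $\boldsymbol\beta\in\mathbb R^m$ with $\|\boldsymbol\beta\|_2=1$, $\boldsymbol\gamma\in\mathbb R^n$ with all $\gamma_i>0$. Firm $i$ chooses a unit vector $\mathbf a_i\in\mathbb R^m$ and $q_i\ge0$, earning $\Pi_i=\alpha q_i\mathbf a_i^\top(\boldsymbol\beta-\sum_{j\ne i}q_j\mathbf a_j)-(1+\alpha)q_i^2+\gamma_iq_i$. $\mathbf A=[\mathbf a_1,\dots,\mathbf a_n]$. An equilibrium is a profile $(\mathbf A^*,\mathbf q^* )$ in which each $(\mathbf a_i^*,q_i^* )$ maximizes $\Pi_i$ over unit $\mathbf a_i$ and $q_i\ge0$ given the others' choices. $\|\boldsymbol\gamma\|_\infty=\max_i\gamma_i$. *)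

(* Defs.v *)
From HB Require Import structures.
From mathcomp Require Import all_boot all_order all_algebra.
From mathcomp Require Import reals.
Set Implicit Arguments. Unset Strict Implicit. Unset Printing Implicit Defensive.
Import Order.TTheory GRing.Theory Num.Theory.
Local Open Scope ring_scope.

Definition vdot (R : realType) (k : nat) (u v : 'cV[R]_k) : R :=
  \sum_(l < k) u l 0 * v l 0.

Definition unit_vec (R : realType) (k : nat) (u : 'cV[R]_k) : Prop :=
  vdot u u = 1.

(* Profit of firm i when it plays (a, x) and the other firms play the
   columns of A (the strategies a_j) with quantities q_j. *)
Definition profit (R : realType) (n m : nat) (alpha : R)
  (beta : 'cV[R]_m) (gamma : 'cV[R]_n) (A : 'M[R]_(m, n)) (q : 'cV[R]_n)
  (i : 'I_n) (a : 'cV[R]_m) (x : R) : R :=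
  alpha * x * vdot a (beta - \sum_(j < n | j != i) (q j 0 *: col j A))
  - (1 + alpha) * x ^+ 2 + gamma i 0 * x.

Definition equilibrium (R : realType) (n m : nat) (alpha : R)
  (beta : 'cV[R]_m) (gamma : 'cV[R]_n) (A : 'M[R]_(m, n)) (q : 'cV[R]_n) : Prop :=
  forall i : 'I_n,
    unit_vec (col i A) /\ 0 <= q i 0 /\
    (forall (a : 'cV[R]_m) (x : R), unit_vec a -> 0 <= x ->
       profit alpha beta gamma A q i a x
       <= profit alpha beta gamma A q i (col i A) (q i 0)).

(* ||gamma||_oo (gamma has positive entries, so 0 is a valid seed). *)
Definition sup_norm (R : realType) (n : nat) (gamma : 'cV[R]_n) : R :=
  \big[Num.max/0]_(i < n) `|gamma i 0|.

(* Main.v *)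
Require Import Defs.
From HB Require Import structures.
From mathcomp Require Import all_boot all_order all_algebra.
From mathcomp Require Import reals.
Import Order.TTheory GRing.Theory Num.Theory.
Local Open Scope ring_scope.
From mathcomp Require Import ring lra.
From Stdlib Require Classical.
Set Implicit Arguments. Unset Strict Implicit.
Section Vdot.
Variables (R : realType) (k : nat).
Implicit Types u v w : 'cV[R]_k.

Lemma vdotC u v : vdot u v = vdot v u.
Proof. by apply: eq_bigr => l _; rewrite mulrC. Qed.

Lemma vdotDl u v w : vdot (u + v) w = vdot u w + vdot v w.
Proof. by rewrite /vdot -big_split; apply: eq_bigr => l _; rewrite !mxE mulrDl. Qed.

Lemma vdotZl (c : R) u w : vdot (c *: u) w = c * vdot u w.
Proof. by rewrite /vdot mulr_sumr; apply: eq_bigr => l _; rewrite !mxE mulrA. Qed.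

Lemma vdotNl u w : vdot (- u) w = - vdot u w.
Proof. by rewrite -scaleN1r vdotZl mulN1r. Qed.

Lemma vdotBl u v w : vdot (u - v) w = vdot u w - vdot v w.
Proof. by rewrite vdotDl vdotNl. Qed.

Lemma vdotDr u v w : vdot w (u + v) = vdot w u + vdot w v.
Proof. by rewrite vdotC vdotDl !(vdotC w). Qed.
Lemma vdotZr (c : R) u w : vdot w (c *: u) = c * vdot w u.
Proof. by rewrite vdotC vdotZl vdotC. Qed.
Lemma vdotNr u w : vdot w (- u) = - vdot w u.
Proof. by rewrite vdotC vdotNl vdotC. Qed.
Lemma vdotBr u v w : vdot w (u - v) = vdot w u - vdot w v.
Proof. by rewrite vdotDr vdotNr. Qed.
Lemma vdot0l w : vdot 0 w = 0.
Proof. by rewrite -(scale0r 0) vdotZl mul0r. Qed.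
Lemma vdot0r w : vdot w 0 = 0.
Proof. by rewrite vdotC vdot0l. Qed.

Lemma vdot_ge0 u : 0 <= vdot u u.
Proof. by apply: sumr_ge0 => l _; rewrite -expr2 sqr_ge0. Qed.

Lemma vdot_eq0 u : vdot u u = 0 -> u = 0.
Proof.
move=> /eqP; rewrite /vdot psumr_eq0; last by move=> l _; rewrite -expr2 sqr_ge0.
move=> /allP H; apply/matrixP => l j; rewrite (ord1 j) mxE.
by have := H l (mem_index_enum l); rewrite -expr2 sqrf_eq0 => /eqP.
Qed.

Lemma unit_neq0 u : unit_vec u -> u != 0.
Proof. by move=> H; apply/eqP => E; move: H; rewrite /unit_vec E vdot0l => /eqP; rewrite eq_sym oner_eq0. Qed.

Lemma unit_dot_le1 u v : unit_vec u -> unit_vec v -> vdot u v <= 1.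
Proof.
move=> Hu Hv; have := vdot_ge0 (u - v).
rewrite !vdotBl !vdotBr Hu Hv (vdotC v u); lra.
Qed.

Lemma unit_dot_eq1 u v : unit_vec u -> unit_vec v -> vdot u v = 1 -> u = v.
Proof.
move=> Hu Hv H; apply/eqP; rewrite -subr_eq0; apply/eqP/vdot_eq0.
by rewrite !vdotBl !vdotBr Hu Hv (vdotC v u) H; lra.
Qed.

Lemma scale_vec_eq (c d : R) u : unit_vec u -> c *: u = d *: u -> c = d.
Proof.
move=> Hu H; have := congr1 (fun x => vdot x u) H => /=.
by rewrite !vdotZl Hu !mulr1.
Qed.
End Vdot.

Lemma mulmx_cols (R : realType) (m n : nat) (A : 'M[R]_(m, n)) (q : 'cV[R]_n) :
  A *m q = \sum_j q j 0 *: col j A.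
Proof.
apply/matrixP => l c; rewrite (ord1 c) !mxE summxE; apply: eq_bigr => j _.
by rewrite !mxE mulrC.
Qed.

Lemma sum_others (R : realType) (m n : nat) (A : 'M[R]_(m, n)) (q : 'cV[R]_n) i :
  \sum_(j < n | j != i) q j 0 *: col j A = A *m q - q i 0 *: col i A.
Proof. by rewrite mulmx_cols [X in _ = X - _](bigD1 i) //= addrAC subrr add0r. Qed.

Section BR.
Variables (R : realType) (m : nat) (alpha g : R) (v : 'cV[R]_m).
Definition P (a : 'cV[R]_m) (x : R) := alpha * x * vdot a v - (1 + alpha) * x ^+ 2 + g * x.

Lemma br_suff a0 x0 r : 0 < alpha -> 0 < g -> unit_vec a0 -> 0 <= r -> v = r *: a0 ->
  x0 * (2 + 2 * alpha) = alpha * r + g ->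
  forall a x, unit_vec a -> 0 <= x -> P a x <= P a0 x0.
Proof.
move=> Ha Hg U0 Hr Hv Hx a x Ua Hx0; rewrite /P Hv !vdotZr U0 mulr1.
have Hd := unit_dot_le1 Ua U0.
have H1 : alpha * x * (r * vdot a a0) <= alpha * x * r.
  apply: ler_wpM2l; first by apply: mulr_ge0 => //; apply: ltW.
  by rewrite -{2}(mulr1 r); apply: ler_wpM2l.
have : 0 <= (1 + alpha) * (x - x0) ^+ 2 by apply: mulr_ge0; [rewrite addr_ge0 // ltW | apply: sqr_ge0].
have e1 : x * (alpha * r + g) = x * (x0 * (2 + 2 * alpha)) by rewrite Hx.
have e2 : x0 * (alpha * r + g) = x0 * (x0 * (2 + 2 * alpha)) by rewrite Hx.
move: e1 e2 H1; rewrite !expr2; lra.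
Qed.

Lemma br_nec a0 x0 (b : 'cV[R]_m) : 0 < alpha -> 0 < g -> unit_vec b -> unit_vec a0 -> 0 <= x0 ->
  (forall a x, unit_vec a -> 0 <= x -> P a x <= P a0 x0) ->
  exists r, 0 <= r /\ v = r *: a0 /\ x0 * (2 + 2 * alpha) = alpha * r + g.
Proof.
move=> Ha Hg Ub U0 Hx0 H.
have [t [as_ [Ht [Uas Hv]]]] : exists t (as_ : 'cV[R]_m), 0 <= t /\ unit_vec as_ /\ v = t *: as_.
  have [E|NE] := eqVneq (vdot v v) 0.
    by exists 0, b; split => //; split => //; rewrite scale0r; apply: vdot_eq0.
  have Hp : 0 < vdot v v by rewrite lt_def NE vdot_ge0.
  set t := Num.sqrt (vdot v v).
  have Ht : 0 < t by rewrite sqrtr_gt0.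
  have Ht2 : t ^+ 2 = vdot v v by rewrite sqr_sqrtr // ltW.
  exists t, (t^-1 *: v); split; first exact: ltW.
  split; last by rewrite scalerA mulfV ?scale1r // gt_eqF.
  rewrite /unit_vec vdotZl vdotZr -Ht2 mulrA -expr2 exprVn mulVf //.
  by rewrite expf_neq0 // gt_eqF.
set c := alpha * t + g.
have h : 0 <= alpha * t by apply: mulr_ge0 => //; apply: ltW.
have Hc : 0 < c by rewrite /c; lra.
set xs := c / (2 + 2 * alpha).
have Hxs : xs * (2 + 2 * alpha) = c by rewrite /xs mulfVK //; lra.
have Hxs0 : 0 < xs by rewrite /xs divr_gt0 //; lra.
have := H as_ xs Uas (ltW Hxs0).
rewrite /P Hv !vdotZr Uas mulr1.
set d := vdot a0 as_.
have Hd := unit_dot_le1 U0 Uas.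
move=> Hle.
have H1 : alpha * x0 * (t * d) <= alpha * x0 * t.
  apply: ler_wpM2l; first by apply: mulr_ge0 => //; apply: ltW.
  by rewrite -{2}(mulr1 t); apply: ler_wpM2l.
have Hsq : (1 + alpha) * (x0 - xs) ^+ 2 <= 0.
  have e1 : x0 * (alpha * t + g) = x0 * (xs * (2 + 2 * alpha)) by rewrite Hxs.
  have e2 : xs * (alpha * t + g) = xs * (xs * (2 + 2 * alpha)) by rewrite Hxs.
  move: e1 e2 H1 Hle; rewrite !expr2; lra.
have Ex : x0 = xs.
  have : (x0 - xs) ^+ 2 <= 0.
    by rewrite -(pmulr_rle0 _ (_ : 0 < 1 + alpha)) //; lra.
  move=> Hs; apply/eqP; rewrite -subr_eq0 -sqrf_eq0 eq_le Hs sqr_ge0 //.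
subst x0.
have Htd : t * (1 - d) = 0.
  have H2 : alpha * xs * (t * (1 - d)) <= 0 by nra.
  have H3 : 0 <= t * (1 - d) by apply: mulr_ge0 => //; rewrite subr_ge0.
  have Hax : 0 < alpha * xs by apply: mulr_gt0.
  apply/eqP; rewrite eq_le H3 andbT.
  by rewrite -(pmulr_rle0 _ Hax).
exists t; split => //; split; last by rewrite Hxs.
move/eqP: Htd; rewrite mulf_eq0 => /orP [/eqP Et|].
  by rewrite ?Hv Et !scale0r.
rewrite subr_eq0 => /eqP Ed.
by rewrite ?Hv (unit_dot_eq1 U0 Uas (esym Ed)).
Qed.
End BR.

Lemma equil_iff (R : realType) n m (alpha : R) (beta : 'cV[R]_m) (gamma : 'cV[R]_n)
  (A : 'M[R]_(m, n)) q :
  0 < alpha -> unit_vec beta -> (forall i, 0 < gamma i 0) ->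
  equilibrium alpha beta gamma A q <->
  forall i, unit_vec (col i A) /\ 0 <= q i 0 /\ exists r, 0 <= r /\
   beta - (A *m q - q i 0 *: col i A) = r *: col i A /\
   q i 0 * (2 + 2 * alpha) = alpha * r + gamma i 0.
Proof.
move=> Ha Ub Hg; split.
  move=> H i; have [U [Q Hmax]] := H i; split => //; split => //.
  have := br_nec (g := gamma i 0) (v := beta - \sum_(j < n | j != i) q j 0 *: col j A)
     Ha (Hg i) Ub U Q Hmax.
  by rewrite sum_others.
move=> H i; have [U [Q [r [Hr [Hv Hx]]]]] := H i; split => //; split => // a x Ua Hx0.
rewrite -sum_others in Hv.
exact: (br_suff (g := gamma i 0) Ha (Hg i) U Hr Hv Hx Ua Hx0).
Qed.

Lemma sq1_cases (R : realType) (s : R) : s = 1 \/ s = -1 -> s * s = 1.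
Proof. by case=> ->; rewrite ?mulr1 ?mulrNN ?mulr1. Qed.

Lemma sigma_nec (R : realType) n m (alpha : R) (beta : 'cV[R]_m) (gamma : 'cV[R]_n)
  (A : 'M[R]_(m, n)) q (sigma : 'cV[R]_n) :
  0 < alpha -> unit_vec beta -> (forall i, 0 < gamma i 0) ->
  (forall i, sigma i 0 = 1 \/ sigma i 0 = -1) ->
  (forall i, col i A = sigma i 0 *: beta) ->
  equilibrium alpha beta gamma A q ->
  (forall j, sigma j 0 = -1 ->
     (2 + alpha) - (2 + (n%:R + 1) * alpha) / (2 * (1 + alpha)) * gamma j 0
     <= vdot sigma gamma) /\
  (forall j, sigma j 0 = 1 ->
     vdot sigma gamma
     <= (2 + alpha) + (2 + (n%:R + 1) * alpha) / (2 * (1 + alpha)) * gamma j 0) /\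
  q = (2 + alpha)^-1 *: gamma
      - (alpha * (vdot sigma gamma - (2 + alpha))
         / ((2 + alpha) * (2 + (n%:R + 1) * alpha))) *: sigma.
Proof.
move=> Ha Ub Hg Hs HA /(equil_iff A q Ha Ub Hg) H.
set S := \sum_j sigma j 0 * q j 0.
have HAq : A *m q = S *: beta.
  rewrite mulmx_cols /S scaler_suml; apply: eq_bigr => j _.
  by rewrite HA scalerA mulrC.
set D := vdot sigma gamma.
set N := n%:R : R.
set M := 2 + (N + 1) * alpha.
have HN : 0 <= N := ler0n _ _.
have HM : 0 < M.
  have : 0 < (N + 1) * alpha by apply: mulr_gt0 => //; lra.
  rewrite /M; lra.
have Hi : forall i, exists r, 0 <= r /\ r = sigma i 0 * (1 - S) + q i 0 /\
   q i 0 * (2 + alpha) = alpha * sigma i 0 * (1 - S) + gamma i 0.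
  move=> i; have [_ [_ [r [Hr [Hv Hx]]]]] := H i.
  exists r; rewrite HA HAq in Hv.
  have := congr1 (fun x => vdot x beta) Hv => /=.
  rewrite !vdotBl !vdotZl Ub !mulr1 => E.
  case: (Hs i) => Es; rewrite Es in E *.
    have Er : r = 1 * (1 - S) + q i 0 by lra.
    by split => //; split => //; rewrite Er in Hx; lra.
  have Er : r = -1 * (1 - S) + q i 0 by lra.
  by split => //; split => //; rewrite Er in Hx; lra.
have Ht : forall j, (2 + alpha) * (sigma j 0 * q j 0) = alpha * (1 - S) + sigma j 0 * gamma j 0.
  move=> j; have [r [_ [_ Hq]]] := Hi j.
  by case: (Hs j) => Es; rewrite Es in Hq *; lra.
have Hsum : (2 + alpha) * S = alpha * N * (1 - S) + D.
  have : \sum_j (2 + alpha) * (sigma j 0 * q j 0)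
         = \sum_j (alpha * (1 - S) + sigma j 0 * gamma j 0).
    by apply: eq_bigr => j _; exact: Ht.
  rewrite -mulr_sumr big_split /= sumr_const card_ord -/S -mulr_natr => ->.
  rewrite /D /vdot /N; lra.
have E1' : M * (1 - S) = 2 + alpha - D by move: Hsum; rewrite /M; lra.
have E1 : 1 - S = (2 + alpha - D) / M.
  rewrite -E1'; by field; rewrite gt_eqF.
have ED : D = 2 + alpha - M * (1 - S) by lra.
set K := M / (2 * (1 + alpha)).
have HK : 0 <= K by rewrite /K divr_ge0 //; lra.
split.
  move=> j Ej; have [r [Hr [Er Hq]]] := Hi j; rewrite Ej in Er Hq.
  have key : K * gamma j 0 - (2 + alpha - D) = K * (gamma j 0 - (2 + 2 * alpha) * (1 - S)).
    rewrite ED /K /M; field; lra.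
  have h0 := mulr_ge0 (_ : 0 <= 2 + alpha) Hr.
  have : 0 <= gamma j 0 - (2 + 2 * alpha) * (1 - S).
    have := h0 ltac:(lra); rewrite Er; lra.
  by move=> h; have := mulr_ge0 HK h; rewrite -key; lra.
split.
  move=> j Ej; have [r [Hr [Er Hq]]] := Hi j; rewrite Ej in Er Hq.
  have key : (2 + alpha) + K * gamma j 0 - D = K * ((2 + 2 * alpha) * (1 - S) + gamma j 0).
    rewrite ED /K /M; field; lra.
  have h0 := mulr_ge0 (_ : 0 <= 2 + alpha) Hr.
  have : 0 <= (2 + 2 * alpha) * (1 - S) + gamma j 0.
    have := h0 ltac:(lra); rewrite Er; lra.
  by move=> h; have := mulr_ge0 HK h; rewrite -key; lra.
apply/matrixP => i c; rewrite (ord1 c) !mxE.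
have [r [_ [_ Hq]]] := Hi i.
have -> : q i 0 = (alpha * sigma i 0 * (1 - S) + gamma i 0) / (2 + alpha).
  by rewrite -Hq; field; lra.
rewrite E1; field; apply/andP; split; rewrite gt_eqF //; lra.
Qed.

Lemma sigma_suff (R : realType) n m (alpha : R) (beta : 'cV[R]_m) (gamma : 'cV[R]_n)
  (sigma : 'cV[R]_n) :
  0 < alpha -> unit_vec beta -> (forall i, 0 < gamma i 0) ->
  (forall i, sigma i 0 = 1 \/ sigma i 0 = -1) ->
  (forall i, 0 <= sigma i 0 * ((2 + alpha - vdot sigma gamma) / (2 + (n%:R + 1) * alpha))
                   * (2 + 2 * alpha) + gamma i 0) ->
  exists A : 'M[R]_(m, n), (forall i, col i A = sigma i 0 *: beta) /\
   equilibrium alpha beta gamma A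
     ((2 + alpha)^-1 *: gamma
      - (alpha * (vdot sigma gamma - (2 + alpha))
         / ((2 + alpha) * (2 + (n%:R + 1) * alpha))) *: sigma).
Proof.
move=> Ha Ub Hg Hs Hpos.
set A := \matrix_(l, j) (sigma j 0 * beta l 0).
have HA : forall i, col i A = sigma i 0 *: beta.
  by move=> i; apply/matrixP => l c; rewrite (ord1 c) !mxE.
exists A; split => //.
set D := vdot sigma gamma.
set N := n%:R : R.
set M := 2 + (N + 1) * alpha.
set mu := alpha * (D - (2 + alpha)) / ((2 + alpha) * M).
set q := (2 + alpha)^-1 *: gamma - mu *: sigma.
have HN : 0 <= N := ler0n _ _.
have HM : 0 < M.
  have : 0 < (N + 1) * alpha by apply: mulr_gt0 => //; lra.
  rewrite /M; lra.
have Hqj : forall j, q j 0 = (2 + alpha)^-1 * gamma j 0 - mu * sigma j 0.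
  by move=> j; rewrite !mxE.
set S := \sum_j sigma j 0 * q j 0.
have HS : S = (2 + alpha)^-1 * D - mu * N.
  have : S = \sum_j ((2 + alpha)^-1 * (sigma j 0 * gamma j 0) - mu).
    apply: eq_bigr => j _; rewrite Hqj.
    by case: (Hs j) => ->; ring.
  rewrite big_split /= sumr_const card_ord -mulr_sumr => ->.
  by rewrite -mulr_natr /D /vdot /N; ring.
have HAq : A *m q = S *: beta.
  rewrite mulmx_cols /S scaler_suml; apply: eq_bigr => j _.
  by rewrite HA scalerA mulrC.
have E1 : 1 - S = (2 + alpha - D) / M.
  rewrite HS /mu /M; field; apply/andP; split; rewrite gt_eqF //; lra.
apply/(equil_iff A q Ha Ub Hg) => i.
set r := sigma i 0 * (1 - S) + q i 0.
have key : q i 0 * (2 + 2 * alpha) = alpha * r + gamma i 0.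
  rewrite /r Hqj E1 /mu; field; apply/andP; split; rewrite gt_eqF //; lra.
have key2 : (2 + alpha) * r = sigma i 0 * ((2 + alpha - D) / M) * (2 + 2 * alpha) + gamma i 0.
  rewrite /r Hqj E1 /mu; field; apply/andP; split; rewrite gt_eqF //; lra.
have Hr : 0 <= r.
  have : 0 <= (2 + alpha) * r by rewrite key2; exact: Hpos.
  by rewrite pmulr_rge0 //; lra.
split.
  by rewrite HA /unit_vec vdotZl vdotZr Ub mulr1 sq1_cases.
split.
  have : 0 < q i 0 * (2 + 2 * alpha).
    by rewrite key; have := mulr_ge0 (ltW Ha) Hr; have := Hg i; lra.
  by rewrite pmulr_lgt0; [move/ltW | lra].
exists r; split => //; split => //.
rewrite HA HAq /r; apply/matrixP => l c; rewrite !mxE.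
by case: (Hs i) => ->; ring.
Qed.

Lemma sup_norm_max (R : realType) n (gamma : 'cV[R]_n) i :
  (forall j, 0 < gamma j 0) -> (forall j, gamma j 0 <= gamma i 0) ->
  gamma i 0 = sup_norm gamma.
Proof.
move=> Hg Hm; apply/eqP; rewrite eq_le; apply/andP; split.
  rewrite /sup_norm (bigD1 i) //= le_max ger0_norm ?lexx //; exact: ltW.
apply: (big_ind (fun x => x <= gamma i 0)).
- exact: ltW.
- by move=> x y Hx Hy; rewrite ge_max Hx Hy.
- by move=> j _; rewrite ger0_norm ?Hm // ltW.
Qed.

Definition ev {R : realType} {m} (i : 'I_m) : 'cV[R]_m := \col_k ((k == i)%:R).

Lemma vdot_ev (R : realType) m (u : 'cV[R]_m) i : vdot u (ev i) = u i 0.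
Proof.
rewrite /vdot (bigD1 i) //= big1 => [|k Hk]; rewrite !mxE ?eqxx ?mulr1 ?addr0 //.
by rewrite (negbTE Hk) mulr0.
Qed.

Lemma exists_orth (R : realType) m (beta : 'cV[R]_m) :
  (2 <= m)%N -> unit_vec beta -> exists e, unit_vec e /\ vdot beta e = 0.
Proof.
move=> Hm Ub.
have H0 : (0 < m)%N by apply: leq_trans Hm.
set i0 := Ordinal H0; set i1 := Ordinal Hm.
set b0 := beta i0 0; set b1 := beta i1 0.
have Hne : i1 != i0 by [].
have [E|NE] := eqVneq (b0 ^+ 2 + b1 ^+ 2) 0.
  have Hb0 : b0 = 0.
    apply/eqP; rewrite -sqrf_eq0 eq_le sqr_ge0 andbT.
    by have := sqr_ge0 b1; lra.
  exists (ev i0); split; last by rewrite vdot_ev.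
  by rewrite /unit_vec vdot_ev !mxE eqxx.
have Hp : 0 < b0 ^+ 2 + b1 ^+ 2.
  by rewrite lt_def NE addr_ge0 // sqr_ge0.
set s := Num.sqrt (b0 ^+ 2 + b1 ^+ 2).
have Hs : 0 < s by rewrite sqrtr_gt0.
have Hs2 : s ^+ 2 = b0 ^+ 2 + b1 ^+ 2 by rewrite sqr_sqrtr // ltW.
set f := b1 *: ev i0 - b0 *: ev i1.
have Hf0 : f i0 0 = b1. by rewrite !mxE eqxx eq_sym (negbTE Hne) mulr1 mulr0 subr0.
have Hf1 : f i1 0 = - b0 by rewrite !mxE eqxx (negbTE Hne) mulr1 mulr0 sub0r.
exists (s^-1 *: f); split.
  rewrite /unit_vec vdotZl vdotZr {2}/f vdotBr !vdotZr !vdot_ev Hf0 Hf1.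
  have : s != 0 by rewrite gt_eqF.
  move: Hs2; rewrite !expr2 => Hs2 Hs0.
  rewrite mulrA -[_ * s^-1 * _]mulrA.
  have -> : b1 * b1 - b0 * - b0 = s * s by rewrite Hs2; ring.
  by field.
by rewrite vdotZr /f vdotBr !vdotZr !vdot_ev -/b0 -/b1; ring.
Qed.

Lemma find_switch (P : nat -> bool) n : P 0%N -> ~~ P n ->
  exists k, (k < n)%N /\ P k /\ ~~ P k.+1.
Proof.
elim: n => [-> //|n IH] H0 Hn.
case Pn: (P n); first by exists n; rewrite ltnSn Hn.
have [k [Hk [Pk Pk1]]] := IH H0 (negbT Pn).
by exists k; split => //; apply: ltnW.
Qed.

Lemma pre_step (V : zmodType) n k (Hk : (k < n)%N) (F : 'I_n -> V) :
  \sum_(i < n | (i < k.+1)%N) F i = \sum_(i < n | (i < k)%N) F i + F (Ordinal Hk).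
Proof.
rewrite (bigD1 (Ordinal Hk)) /= ?ltnSn // addrC; congr (_ + _).
apply: eq_bigl => i; rewrite -val_eqE /= ltnS.
by case: (ltngtP i k).
Qed.

Lemma split3 (V : zmodType) n k (Hk : (k < n)%N) (F : 'I_n -> V) :
  \sum_i F i = \sum_(i < n | (i < k)%N) F i + F (Ordinal Hk) + \sum_(i < n | (k < i)%N) F i.
Proof.
rewrite (bigID (fun i : 'I_n => (i < k.+1)%N)) /= pre_step; congr (_ + _).
by apply: eq_bigl => i; rewrite -leqNgt.
Qed.

Lemma polygon (R : realType) n m (beta : 'cV[R]_m) (l : 'cV[R]_n) (G : R) :
  (2 <= m)%N -> unit_vec beta -> 0 < G -> (forall i, 0 < l i 0) ->
  G <= \sum_i l i 0 ->
  (forall i, l i 0 <= G + \sum_(j < n | j != i) l j 0) ->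
  exists a : 'I_n -> 'cV[R]_m, (forall i, unit_vec (a i)) /\
    \sum_i l i 0 *: a i = G *: beta.
Proof.
move=> Hm Ub HG Hl HL Hpoly.
have [e [Ue Hbe]] := exists_orth Hm Ub.
have Heb : vdot e beta = 0 by rewrite vdotC.
set L := \sum_i l i 0.
have HL' : G <= L by exact: HL.
pose Sp j := \sum_(i < n | (i < j)%N) l i 0.
have Sp0 : Sp 0%N = 0 by rewrite /Sp big_pred0 // => i; rewrite ltn0.
have SpN : Sp n = L by rewrite /Sp; apply: eq_bigl => i; rewrite ltn_ord.
have Sp_ge0 : forall j, 0 <= Sp j by move=> j; apply: sumr_ge0 => i _; exact: ltW (Hl _).
have : exists k, (k < n)%N /\ (G + Sp k <= (G + L) / 2) /\ ~~ (G + Sp k.+1 <= (G + L) / 2).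
  apply: (find_switch (P := fun j => G + Sp j <= (G + L) / 2)).
    by rewrite Sp0; lra.
  by rewrite SpN -ltNge; lra.
move=> [k [Hk [Pk Pk1]]].
set ko := Ordinal Hk.
set X := G + Sp k.
set Y := l ko 0.
set Z := \sum_(i < n | (k < i)%N) l i 0.
have HLs : L = Sp k + Y + Z by rewrite /L (split3 Hk).
have Hstep : Sp k.+1 = Sp k + Y by rewrite /Sp pre_step.
rewrite -ltNge Hstep in Pk1.
have Hother : \sum_(j < n | j != ko) l j 0 = L - Y.
  by rewrite /L [in RHS](bigD1 ko) //= addrAC subrr add0r.
have HY : 0 < Y by exact: Hl.
have HSk := Sp_ge0 k.
have HX : 0 < X by rewrite /X; lra.
have HZ : 0 <= Z by apply: sumr_ge0 => i _; exact: ltW (Hl _).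
have T1 : X <= Y + Z by move: Pk; rewrite HLs /X; lra.
have T2 : Z <= X + Y by move: Pk1; rewrite HLs /X; lra.
have T3 : Y <= X + Z by have := Hpoly ko; rewrite Hother HLs /X -/Y; lra.
have HX0 : X != 0 by rewrite gt_eqF.
set p := (X ^+ 2 + Y ^+ 2 - Z ^+ 2) / (2 * X).
have Hp2 : 2 * X * p = X ^+ 2 + Y ^+ 2 - Z ^+ 2 by rewrite /p; field.
have HYp : 0 <= Y ^+ 2 - p ^+ 2.
  have e1 : Y - p = (Z - X + Y) * (Z + X - Y) / (2 * X) by rewrite /p; field.
  have e2 : Y + p = (X + Y - Z) * (X + Y + Z) / (2 * X) by rewrite /p; field.
  have -> : Y ^+ 2 - p ^+ 2 = (Y - p) * (Y + p) by ring.
  rewrite e1 e2; apply: mulr_ge0; apply: divr_ge0; try lra; apply: mulr_ge0; lra.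
set h := Num.sqrt (Y ^+ 2 - p ^+ 2).
have Hh2 : h ^+ 2 = Y ^+ 2 - p ^+ 2 by rewrite sqr_sqrtr.
have dot_gen : forall x y : R,
    vdot (x *: beta + y *: e) (x *: beta + y *: e) = x ^+ 2 + y ^+ 2.
  by move=> x y; rewrite !vdotDl !vdotDr !vdotZl !vdotZr Ub Ue Hbe Heb; ring.
set ak := Y^-1 *: (p *: beta + h *: e).
set aC := Z^-1 *: ((X - p) *: beta + (- h) *: e).
have Uak : unit_vec ak.
  by rewrite /unit_vec /ak vdotZl vdotZr dot_gen Hh2; field; rewrite gt_eqF.
have UaC : Z != 0 -> unit_vec aC.
  move=> HZ0; rewrite /unit_vec /aC vdotZl vdotZr dot_gen sqrrN Hh2.
  have -> : (X - p) ^+ 2 + (Y ^+ 2 - p ^+ 2) = Z ^+ 2.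
    by move: Hp2; rewrite !expr2 => Hp2'; lra.
  by field.
pose a (i : 'I_n) := if (i < k)%N then - beta else if (k < i)%N then aC else ak.
exists a; split.
  move=> i; rewrite /a; case: ifP => _.
    by rewrite /unit_vec vdotNl vdotNr opprK Ub.
  case: ifP => Hki; last exact: Uak.
  apply: UaC; rewrite gt_eqF //; apply: (lt_le_trans (Hl i)).
  rewrite /Z (bigD1 i) //= lerDl; apply: sumr_ge0 => j _; exact: ltW (Hl _).
rewrite (split3 Hk (fun i => l i 0 *: a i)).
have s1 : \sum_(i < n | (i < k)%N) l i 0 *: a i = (- Sp k) *: beta.
  rewrite (eq_bigr (fun i => (- l i 0) *: beta)) => [|i Hi]; last first.
    by rewrite /a Hi scalerN scaleNr.
  by rewrite -scaler_suml sumrN.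
have s2 : l ko 0 *: a ko = p *: beta + h *: e.
  rewrite /a /= ltnn -/Y /ak scalerA mulfV ?scale1r //; by rewrite gt_eqF.
have s3 : \sum_(i < n | (k < i)%N) l i 0 *: a i = Z *: aC.
  rewrite /Z scaler_suml; apply: eq_bigr => i Hi.
  by rewrite /a ltnNge (ltnW Hi) /= Hi.
have s4 : Z *: aC = (X - p) *: beta + (- h) *: e.
  have [HZ0|HZ0] := eqVneq Z 0.
    have EXY : X = Y by lra.
    have Ep : p = X.
      by rewrite /p HZ0 -EXY; field.
    have Eh : h = 0 by rewrite /h Ep -EXY subrr sqrtr0.
    by rewrite HZ0 Ep Eh subrr oppr0 !scale0r addr0.
  by rewrite /aC scalerA mulfV // scale1r.
rewrite s1 s2 s3 s4 /X; apply/matrixP => r c; rewrite !mxE; ring.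
Qed.

Lemma pm1 (R : realType) (x : R) : x * x = 1 -> x = 1 \/ x = -1.
Proof.
move=> H; have : x ^+ 2 == 1 by rewrite expr2 H.
by rewrite sqrf_eq1 => /orP [/eqP|/eqP]; auto.
Qed.

Lemma pm1_mul (R : realType) (x y : R) : x = 1 \/ x = -1 -> y = 1 \/ y = -1 ->
  x * y = 1 \/ x * y = -1.
Proof. by case=> ->; case=> ->; rewrite ?mul1r ?mulN1r ?opprK; auto. Qed.

Lemma part2 (R : realType) (n m : nat) (alpha : R)
  (beta : 'cV[R]_m) (gamma : 'cV[R]_n) :
  (2 <= n)%N -> 0 < alpha -> unit_vec beta ->
  (forall i, 0 < gamma i 0) ->
  (forall (A : 'M[R]_(m, n)) (q : 'cV[R]_n),
     equilibrium alpha beta gamma A q ->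
     (A *m q = beta /\ q = (2 + alpha)^-1 *: gamma)
     \/ (exists sigma : 'cV[R]_n,
           (forall i, sigma i 0 = 1 \/ sigma i 0 = -1) /\
           (forall i, col i A = sigma i 0 *: beta) /\
           (forall j, sigma j 0 = -1 ->
              (2 + alpha) - (2 + (n%:R + 1) * alpha) / (2 * (1 + alpha)) * gamma j 0
              <= vdot sigma gamma) /\
           (forall j, sigma j 0 = 1 ->
              vdot sigma gamma
              <= (2 + alpha) + (2 + (n%:R + 1) * alpha) / (2 * (1 + alpha)) * gamma j 0) /\
           q = (2 + alpha)^-1 *: gamma
               - (alpha * (vdot sigma gamma - (2 + alpha))
                  / ((2 + alpha) * (2 + (n%:R + 1) * alpha))) *: sigma)).
Proof.
move=> Hn Ha Ub Hg A q E.
have Hdat := (proj1 (equil_iff A q Ha Ub Hg)) E.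
set d := beta - A *m q.
have Hdj : forall j, exists r, d = (r - q j 0) *: col j A /\
    q j 0 * (2 + 2 * alpha) = alpha * r + gamma j 0.
  move=> j; have [_ [_ [r [_ [Hv Hx]]]]] := Hdat j; exists r; split => //.
  rewrite scalerBl -Hv /d; apply/matrixP => l c; rewrite !mxE; ring.
have [Hd0|Hd0] := eqVneq d 0.
  left.
  have Hq : forall j, q j 0 = gamma j 0 / (2 + alpha).
    move=> j; have [r [Hj Hx]] := Hdj j.
    move/eqP: Hj; rewrite Hd0 eq_sym scaler_eq0 (negbTE (unit_neq0 (Hdat j).1)) orbF.
    rewrite subr_eq0 => /eqP Er; rewrite Er in Hx.
    have H2 : q j 0 * (2 + alpha) = gamma j 0 by lra.
    by rewrite -H2; field; lra.
  split; first by apply/eqP; rewrite eq_sym -subr_eq0; apply/eqP.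
  by apply/matrixP => j c; rewrite (ord1 c) !mxE Hq mulrC.
right.
pose i0 := Ordinal (leq_trans (isT : (0 < 2)%N) Hn).
set a0 := col i0 A.
have Ua0 : unit_vec a0 := (Hdat i0).1.
have [r0 [Hc0 _]] := Hdj i0.
set C0 := r0 - q i0 0 in Hc0 *.
have Heps : forall j, col j A = vdot (col j A) a0 *: a0 /\
    (vdot (col j A) a0 = 1 \/ vdot (col j A) a0 = -1).
  move=> j; have [r [Hj _]] := Hdj j.
  set cj := r - q j 0 in Hj *.
  have Hcj : cj != 0 by apply: contra_neq Hd0 => Ecj; rewrite Hj Ecj scale0r.
  have Ea : col j A = (C0 / cj) *: a0.
    apply: (@scalerI _ _ cj) => //; rewrite -Hj scalerA mulrCA mulfV // mulr1.
    exact: Hc0.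
  have Eeps : vdot (col j A) a0 = C0 / cj by rewrite Ea vdotZl Ua0 mulr1.
  split; first by rewrite Eeps.
  apply: pm1; rewrite Eeps; have U := (Hdat j).1; move: U.
  by rewrite /unit_vec Ea vdotZl vdotZr Ua0 mulr1.
pose eps j := vdot (col j A) a0.
set s := \sum_j q j 0 * eps j.
have HAq : A *m q = s *: a0.
  rewrite mulmx_cols /s scaler_suml; apply: eq_bigr => j _.
  by rewrite {1}(Heps j).1 scalerA.
have Hb : beta = (C0 + s) *: a0.
  have Ebeta : beta = d + A *m q.
 rewrite /d; apply/matrixP => l c; rewrite !mxE. rewrite subrK. reflexivity.
  rewrite {1}Ebeta Hc0 HAq -/a0 -scalerDl. reflexivity.
set tau := C0 + s.
have Htau : tau = 1 \/ tau = -1.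
  apply: pm1; move: Ub; rewrite /unit_vec Hb vdotZl vdotZr Ua0 mulr1 => ->.
  by [].
have Ha0 : a0 = tau *: beta by rewrite Hb scalerA (sq1_cases Htau) scale1r.
exists (\col_j (eps j * tau)).
have Hs : forall i, (\col_j (eps j * tau)) i 0 = 1 \/ (\col_j (eps j * tau)) i 0 = -1.
  by move=> i; rewrite mxE; apply: pm1_mul => //; exact: (Heps i).2.
have HA : forall i, col i A = (\col_j (eps j * tau)) i 0 *: beta.
  move=> i; rewrite mxE -scalerA -Ha0; exact: (Heps i).1.
have [H1 [H2 H3]] := sigma_nec Ha Ub Hg Hs HA E.
by split => //; split.
Qed.

Lemma part1 (R : realType) (n m : nat) (alpha : R)
  (beta : 'cV[R]_m) (gamma : 'cV[R]_n) :
  (2 <= n)%N -> (2 <= m)%N -> 0 < alpha -> unit_vec beta ->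
  (forall i, 0 < gamma i 0) ->
  ((exists (A : 'M[R]_(m, n)) (q : 'cV[R]_n),
      equilibrium alpha beta gamma A q /\
      A *m q = beta /\ q = (2 + alpha)^-1 *: gamma)
   \/ (exists (A : 'M[R]_(m, n)) (q : 'cV[R]_n),
      equilibrium alpha beta gamma A q /\ (forall i, col i A = beta))
   \/ (exists (A : 'M[R]_(m, n)) (q : 'cV[R]_n),
      equilibrium alpha beta gamma A q /\
      exists i : 'I_n,
        col i A = beta /\ gamma i 0 = sup_norm gamma /\
        (forall j, j != i -> col j A = - beta))).
Proof.
move=> Hn Hm Ha Ub Hg.
have HN2 : (2 : R) <= n%:R by rewrite (ler_nat R 2 n).
set N := n%:R : R.
set M := 2 + (N + 1) * alpha.
have HM : 0 < M.
  have : 0 < (N + 1) * alpha by apply: mulr_gt0 => //; lra.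
  rewrite /M; lra.
have HM2 : 2 + 2 * alpha <= M.
  have : 0 <= (N - 1) * alpha by apply: mulr_ge0; lra.
  rewrite /M; lra.
have HG0 : (2 + alpha) != 0 by rewrite gt_eqF //; lra.
set one := (const_mx 1 : 'cV[R]_n).
have HD1 : vdot one gamma = \sum_i gamma i 0.
  by apply: eq_bigr => i _; rewrite mxE mul1r.
case: (Classical_Prop.classic (forall i, 0 <= one i 0 * ((2 + alpha - vdot one gamma) / M)
          * (2 + 2 * alpha) + gamma i 0)) => [Hb|Hnb].
  right; left.
  have Hs1 : forall i, one i 0 = 1 \/ one i 0 = -1 by move=> i; left; rewrite mxE.
  have [A [HA HE]] := sigma_suff (m := m) (beta := beta) Ha Ub Hg Hs1 Hb.
  exists A; eexists; split; first exact: HE.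
  by move=> i; rewrite HA mxE scale1r.
have [i0 Hi0] := Classical_Pred_Type.not_all_ex_not _ _ Hnb.
have HGD : 2 + alpha < \sum_i gamma i 0.
  rewrite ltNge; apply/negP => Hle; apply: Hi0.
  rewrite mxE mul1r HD1; apply: addr_ge0; last exact: ltW.
  apply: mulr_ge0; last lra.
  by apply: divr_ge0; [lra | exact: ltW].
case: (Classical_Prop.classic (exists i, 2 + alpha + \sum_(j < n | j != i) gamma j 0 < gamma i 0))
  => [[i Hi]|Hnc].
  right; right.
  set sigma := \col_j (if j == i then 1 else -1 : R).
  have Hs : forall j, sigma j 0 = 1 \/ sigma j 0 = -1.
    by move=> j; rewrite mxE; case: (j == i); auto.
  set S' := \sum_(j < n | j != i) gamma j 0 in Hi *.
  have HS' : 0 <= S' by apply: sumr_ge0 => j _; exact: ltW.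
  have HD : vdot sigma gamma = gamma i 0 - S'.
    rewrite /vdot (bigD1 i) //= mxE eqxx mul1r; congr (_ + _).
    rewrite /S' -sumrN; apply: eq_bigr => j Hj; rewrite mxE (negbTE Hj) mulN1r.
    reflexivity.
  have Hpos : forall j, 0 <= sigma j 0 * ((2 + alpha - vdot sigma gamma) / M)
                          * (2 + 2 * alpha) + gamma j 0.
    move=> j; rewrite HD mxE.
    set t := 2 + alpha - (gamma i 0 - S').
    have Ht : t < 0 by rewrite /t; lra.
    set F := (2 + 2 * alpha) / M.
    have HF1 : F <= 1 by rewrite /F ler_pdivrMr // mul1r.
    have HF0 : 0 <= F by rewrite /F divr_ge0 //; [lra | exact: ltW].
    have EF : t / M * (2 + 2 * alpha) = t * F by rewrite /F; field; rewrite gt_eqF.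
    case: eqP => [-> | Hji].
      rewrite mul1r EF.
      have : 0 <= t * (F - 1) by apply: mulr_le0; lra.
      rewrite /t; lra.
    rewrite mulN1r mulNr EF.
    have : t * F <= 0 by apply: mulr_le0_ge0; lra.
    have := Hg j; lra.
  have [A [HA HE]] := sigma_suff (m := m) (beta := beta) Ha Ub Hg Hs Hpos.
  exists A; eexists; split; first exact: HE.
  exists i; split; first by rewrite HA mxE eqxx scale1r.
  split.
    apply: sup_norm_max => // j.
    have [->|Hji] := eqVneq j i; first exact: lexx.
    have : gamma j 0 <= S'.
      rewrite /S' (bigD1 j) //= lerDl; apply: sumr_ge0 => k _; exact: ltW.
    lra.
  by move=> j Hj; rewrite HA mxE (negbTE Hj) scaleN1r.
left.
have Hpoly : forall i, gamma i 0 <= 2 + alpha + \sum_(j < n | j != i) gamma j 0.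
  move=> i; rewrite leNgt; apply/negP => H; apply: Hnc; exists i; exact: H.
have HG : 0 < 2 + alpha by lra.
have [a [Ua Hsum]] := polygon Hm Ub HG Hg (ltW HGD) Hpoly.
set A := \matrix_(r, i) a i r 0.
have HA : forall i, col i A = a i.
  by move=> i; apply/matrixP => r c; rewrite (ord1 c) !mxE.
set q := (2 + alpha)^-1 *: gamma.
have HAq : A *m q = beta.
  rewrite mulmx_cols.
  under eq_bigr => i _ do rewrite HA mxE -scalerA.
  rewrite -scaler_sumr Hsum scalerA mulVf // scale1r; reflexivity.
exists A, q; split; last by split.
apply/(equil_iff A q Ha Ub Hg) => i.
split; first by rewrite HA.
have Hq0 : 0 <= q i 0.
  rewrite mxE; apply: mulr_ge0; last exact: ltW.
  by rewrite invr_ge0; lra.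
split => //.
exists (q i 0); split => //; split.
  rewrite HAq; apply/matrixP => r c; rewrite !mxE; ring.
rewrite mxE; field; exact: HG0.

Qed.

Unset Implicit Arguments.

Theorem theorem1 (R : realType) (n m : nat) (alpha : R)
  (beta : 'cV[R]_m) (gamma : 'cV[R]_n) :
  (2 <= n)%N -> (2 <= m)%N -> 0 < alpha -> unit_vec beta ->
  (forall i, 0 < gamma i 0) ->
  ((exists (A : 'M[R]_(m, n)) (q : 'cV[R]_n),
      equilibrium alpha beta gamma A q /\
      A *m q = beta /\ q = (2 + alpha)^-1 *: gamma)
   \/ (exists (A : 'M[R]_(m, n)) (q : 'cV[R]_n),
      equilibrium alpha beta gamma A q /\ (forall i, col i A = beta))
   \/ (exists (A : 'M[R]_(m, n)) (q : 'cV[R]_n),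
      equilibrium alpha beta gamma A q /\
      exists i : 'I_n,
        col i A = beta /\ gamma i 0 = sup_norm gamma /\
        (forall j, j != i -> col j A = - beta)))
  /\
  (forall (A : 'M[R]_(m, n)) (q : 'cV[R]_n),
     equilibrium alpha beta gamma A q ->
     (A *m q = beta /\ q = (2 + alpha)^-1 *: gamma)
     \/ (exists sigma : 'cV[R]_n,
           (forall i, sigma i 0 = 1 \/ sigma i 0 = -1) /\
           (forall i, col i A = sigma i 0 *: beta) /\
           (forall j, sigma j 0 = -1 ->
              (2 + alpha) - (2 + (n%:R + 1) * alpha) / (2 * (1 + alpha)) * gamma j 0
              <= vdot sigma gamma) /\
           (forall j, sigma j 0 = 1 ->
              vdot sigma gamma
              <= (2 + alpha) + (2 + (n%:R + 1) * alpha) / (2 * (1 + alpha)) * gamma j 0) /\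
           q = (2 + alpha)^-1 *: gamma
               - (alpha * (vdot sigma gamma - (2 + alpha))
                  / ((2 + alpha) * (2 + (n%:R + 1) * alpha))) *: sigma)).
Proof.
move=> Hn Hm Ha Ub Hg; split; first exact: part1.
exact: part2.
Qed.
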